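(* Let $m>1$, $\chi>0$, $\alpha\in\mathbb R$, and let $p\ge2$ be an integer. (i) If $\chi<C_p$ and $\alpha\le0$, then $\mathcal F^p_{m,\alpha}$ has no critical point in $\mathcal R^p$. (ii) If $\chi=C_p$ and $\alpha<0$, then $\mathcal F^p_{m,\alpha}$ has no critical point in $\mathcal R^p$. (iii) If $\chi>C_p$, then any critical point $V\in\mathcal R^p$ of $\mathcal F^p_{m,\alpha}$ satisfies $\mathcal F^p_m(V)=\frac{2}{m-1}\alpha\,\frac{|V|^2}{2}$; in particular $\mathcal F^p_m(V)$ has the same sign as $\alpha$.
   Context: $\mathcal R^p=\{X\in\mathbb R^p: X_1<\dots<X_p,\ \sum_iX_i=0\}$. $\mathcal F^p_{m,\alpha}(X)=\frac1{m-1}\sum_{i=1}^{p-1}(X_{i+1}-X_i)^{1-m}-\frac{\chi}{m-1}\sum_{1\le i\ne j\le p}|X_i-X_j|^{1-m}+\alpha\frac{|X|^2}{2}$, $\mathcal F^p_m=\mathcal F^p_{m,0}$. $C_p$ is defined by $\frac1{C_p}=\max_{X\in\mathcal R^p}\frac{\sum_{1\le i\ne j\le p}|X_j-X_i|^{1-m}}{\sum_{i=1}^{p-1}(X_{i+1}-X_i)^{1-m}}$. A critical point is a point of $\mathcal R^p$ where the Euclidean gradient of the functional on $\mathbb R^p$ vanishes. *)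

(* Defs.v *)
From HB Require Import structures.
From mathcomp Require Import all_boot all_order all_algebra.
From mathcomp Require Import all_classical all_reals all_analysis.
Set Implicit Arguments. Unset Strict Implicit. Unset Printing Implicit Defensive.
Import Order.TTheory GRing.Theory Num.Theory.
Import numFieldNormedType.Exports.
Local Open Scope classical_set_scope.
Local Open Scope ring_scope.

(* Points of R^p are row vectors X : 'rV[R]_p, coordinate X_i = X ord0 i
   (i : 'I_p, i.e. indices 0..p-1 instead of 1..p). *)
Section Defs.
Variable R : realType.

Definition inRp (p : nat) (X : 'rV[R]_p) : Prop :=
  (forall i j : 'I_p, (i < j)%N -> X ord0 i < X ord0 j) /\
  \sum_(i < p) X ord0 i = 0.

Definition consec_sum (m : R) (p : nat) (X : 'rV[R]_p) : R :=
  \sum_(i < p) \sum_(j < p | val j == (val i).+1) (X ord0 j - X ord0 i) `^ (1 - m).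

Definition pair_sum (m : R) (p : nat) (X : 'rV[R]_p) : R :=
  \sum_(i < p) \sum_(j < p | j != i) `|X ord0 i - X ord0 j| `^ (1 - m).

Definition sqnorm (p : nat) (X : 'rV[R]_p) : R := \sum_(i < p) X ord0 i ^+ 2.

Definition Fmalpha (m chi alpha : R) (p : nat) (X : 'rV[R]_p) : R :=
  (m - 1)^-1 * consec_sum m X - chi / (m - 1) * pair_sum m X
  + alpha * (sqnorm X / 2).

Definition Fm (m chi : R) (p : nat) (X : 'rV[R]_p) : R := Fmalpha m chi 0 X.

(* C_p : 1/C_p = max_{X in R^p} pair_sum / consec_sum (the max is taken as sup) *)
Definition Cp (m : R) (p : nat) : R :=
  (sup [set pair_sum m X / consec_sum m X | X in [set X : 'rV[R]_p | inRp X]])^-1.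

Definition basis_vec (p : nat) (i : 'I_p) : 'rV[R]_p := \row_(j < p) (j == i)%:R.

Definition critical_point (p : nat) (F : 'rV[R]_p -> R) (X : 'rV[R]_p) : Prop :=
  forall i : 'I_p, derivable F X (basis_vec i) /\ 'D_(basis_vec i) F X = 0.

End Defs.

(* Main.v *)
Require Import Defs.
From HB Require Import structures.
From mathcomp Require Import all_boot all_order all_algebra.
From mathcomp Require Import all_classical all_reals all_analysis.
From mathcomp Require Import ring lra.
Import Order.TTheory GRing.Theory Num.Theory.
Import numFieldNormedType.Exports.
Local Open Scope classical_set_scope.
Local Open Scope ring_scope.

Lemma derive_line {R : realType} {p : nat} (f : 'rV[R]_p -> R) X v c :
  is_derive (0:R) 1 (fun h : R => f (h *: v + X)) c -> is_derive X v f c.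
Proof.
move=> d; apply: DeriveDef.
  exact: (proj2 (derivable1P f X v)) (@ex_derive _ _ _ _ _ _ _ d).
rewrite -(@derive_val _ _ _ _ _ _ _ d) /derive.
have -> : (fun h : R => h^-1 *: ((f \o shift X) (h *: v) - f X)) = (fun h => h^-1 *: (((fun h0 => f (h0 *: v + X)) \o shift 0) h%:A - f (0 *: v + X))).
  by apply/funext => h /=; rewrite addr0 scale0r add0r [_%:A]mulr1.
by [].
Qed.

Lemma der_pow {R : realType} (a y : R) : 0 < y ->
  is_derive y 1 (fun z => z `^ a) (a * y `^ (a - 1)).
Proof. move=> y0; exact: is_derive1_powR. Qed.

Lemma der_abs {R : realType} (a y : R) : 0 < y ->
  is_derive y 1 (fun z => `|z| `^ a) (a * y `^ (a - 1)).
Proof.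
move=> y0; apply: (@near_eq_is_derive _ _ _ (fun z => z `^ a)); last exact: der_pow.
by near=> z; rewrite ger0_norm//; apply: ltW; near: z; exact: lt_nbhsr.
Unshelve. end_near. Qed.

Lemma atom_der {R : realType} {p : nat} (g : R -> R) (L : 'rV[R]_p -> R) X v c :
  (forall h w Y, L (h *: w + Y) = h * L w + L Y) ->
  is_derive (L X) 1 g c -> is_derive X v (fun Y => g (L Y)) (c * L v).
Proof.
move=> HL gd; apply: derive_line.
have -> : (fun h => g (L (h *: v + X))) = g \o (fun h => L v * h + L X).
  by apply/funext => h /=; rewrite HL mulrC.
apply: is_derive1_comp; first by rewrite mulr0 add0r.
have H := is_deriveD (is_deriveZ (L v) (is_derive_id (0:R) 1)) (is_derive_cst (L X) (0:R) 1).
apply: is_derive_eq H _.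
by rewrite addr0 /GRing.scale /= mulr1.
Qed.

Lemma der_sumP {R : realType} {p n : nat} (P : pred 'I_n) (h : 'I_n -> 'rV[R]_p -> R)
  (dh : 'I_n -> R) X v :
  (forall i, P i -> is_derive X v (h i) (dh i)) ->
  is_derive X v (fun Y => \sum_(i < n | P i) h i Y) (\sum_(i < n | P i) dh i).
Proof.
move=> H.
have -> : (fun Y => \sum_(i < n | P i) h i Y) =
    \sum_(i < n) (fun Y => if P i then h i Y else 0).
  by rewrite fct_sumE; apply/funext => Y; rewrite big_mkcond.
rewrite (big_mkcond P dh).
apply: (@is_derive_sum _ _ _ n _ X v (fun i => if P i then dh i else 0)) => i; case: ifP => Pi.
  exact: H.
exact: is_derive_cst.
Qed.

Lemma diff_sumP {R : realType} {p n : nat} (P : pred 'I_n) (h : 'I_n -> 'rV[R]_p -> R) X :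
  (forall i, P i -> differentiable (h i) X) ->
  differentiable (fun Y => \sum_(i < n | P i) h i Y) X.
Proof.
move=> H.
have -> : (fun Y => \sum_(i < n | P i) h i Y) =
    \sum_(i < n) (fun Y => if P i then h i Y else 0).
  by rewrite fct_sumE; apply/funext => Y; rewrite big_mkcond.
apply: differentiable_sum => i /=; move: (H i); case: (P i) => Hi.
  exact: Hi.
exact: differentiable_cst.
Qed.

Lemma isdD {R : realType} {p : nat} (f g : 'rV[R]_p -> R) X v df dg :
  is_derive X v f df -> is_derive X v g dg -> is_derive X v (fun Y => f Y + g Y) (df + dg).
Proof. exact: is_deriveD. Qed.
Lemma isdB {R : realType} {p : nat} (f g : 'rV[R]_p -> R) X v df dg :
  is_derive X v f df -> is_derive X v g dg -> is_derive X v (fun Y => f Y - g Y) (df - dg).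
Proof. exact: is_deriveB. Qed.
Lemma isdZ {R : realType} {p : nat} (k : R) (f : 'rV[R]_p -> R) X v df :
  is_derive X v f df -> is_derive X v (fun Y => k * f Y) (k * df).
Proof. exact: is_deriveZ. Qed.
Lemma isdZr {R : realType} {p : nat} (k : R) (f : 'rV[R]_p -> R) X v df :
  is_derive X v f df -> is_derive X v (fun Y => f Y * k) (df * k).
Proof.
move=> H; rewrite mulrC.
have -> : (fun Y => f Y * k) = (fun Y => k * f Y) by apply/funext => Y; rewrite mulrC.
exact: isdZ.
Qed.

Lemma difD {R : realType} {p : nat} (f g : 'rV[R]_p -> R) X :
  differentiable f X -> differentiable g X -> differentiable (fun Y => f Y + g Y) X.
Proof. exact: differentiableD. Qed.
Lemma difB {R : realType} {p : nat} (f g : 'rV[R]_p -> R) X :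
  differentiable f X -> differentiable g X -> differentiable (fun Y => f Y - g Y) X.
Proof. exact: differentiableB. Qed.
Lemma difZ {R : realType} {p : nat} (k : R) (f : 'rV[R]_p -> R) X :
  differentiable f X -> differentiable (fun Y => k * f Y) X.
Proof. exact: differentiableZ. Qed.
Lemma difZr {R : realType} {p : nat} (k : R) (f : 'rV[R]_p -> R) X :
  differentiable f X -> differentiable (fun Y => f Y * k) X.
Proof.
move=> H.
have -> : (fun Y => f Y * k) = (fun Y => k * f Y) by apply/funext => Y; rewrite mulrC.
exact: difZ.
Qed.

Lemma atom_diff {R : realType} {p : nat} (g : R -> R) (L : 'rV[R]_p -> R) X :
  differentiable L X -> derivable g (L X) 1 -> differentiable (fun Y => g (L Y)) X.
Proof. by move=> dL /derivable1_diffP dg; exact: differentiable_comp. Qed.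

Lemma coord_diff {R : realType} {p : nat} (i j : 'I_p) (X : 'rV[R]_p) :
  differentiable (fun Y : 'rV[R]_p => Y ord0 j - Y ord0 i) X.
Proof. by apply: difB; exact: differentiable_coord. Qed.

Lemma powX {R : realType} (a y : R) : 0 < y -> a * y `^ (a - 1) * y = a * y `^ a.
Proof.
move=> y0; rewrite -mulrA; congr (_ * _).
have E : y `^ (a - 1) * y `^ 1 = y `^ a.
  by rewrite -powRD ?subrK // (gt_eqF y0) implybT.
by rewrite -E powRr1 // ltW.
Qed.

Lemma HLd {R : realType} {p : nat} (i j : 'I_p) :
  forall (h : R) (w Y : 'rV[R]_p),
  (fun Z : 'rV[R]_p => Z ord0 j - Z ord0 i) (h *: w + Y) =
  h * (fun Z : 'rV[R]_p => Z ord0 j - Z ord0 i) w + (fun Z : 'rV[R]_p => Z ord0 j - Z ord0 i) Y.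
Proof. by move=> h w Y /=; rewrite !mxE; ring. Qed.

Lemma HLc {R : realType} {p : nat} (i : 'I_p) :
  forall (h : R) (w Y : 'rV[R]_p),
  (fun Z : 'rV[R]_p => Z ord0 i) (h *: w + Y) =
  h * (fun Z : 'rV[R]_p => Z ord0 i) w + (fun Z : 'rV[R]_p => Z ord0 i) Y.
Proof. by move=> h w Y /=; rewrite !mxE. Qed.

Lemma atomX_pow {R : realType} {p : nat} (a : R) (i j : 'I_p) (X : 'rV[R]_p) :
  0 < X ord0 j - X ord0 i ->
  is_derive X X (fun Y : 'rV[R]_p => (Y ord0 j - Y ord0 i) `^ a) (a * (X ord0 j - X ord0 i) `^ a).
Proof.
move=> x0; apply: is_derive_eq.
  exact: (@atom_der R p _ _ X X _ (@HLd R p i j) (@der_pow R a _ x0)).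
exact: powX.
Qed.

Lemma atomX_abs {R : realType} {p : nat} (a : R) (i j : 'I_p) (X : 'rV[R]_p) :
  0 < X ord0 j - X ord0 i ->
  is_derive X X (fun Y : 'rV[R]_p => `|Y ord0 j - Y ord0 i| `^ a) (a * (X ord0 j - X ord0 i) `^ a).
Proof.
move=> x0; apply: is_derive_eq.
  exact: (@atom_der R p _ _ X X _ (@HLd R p i j) (@der_abs R a _ x0)).
exact: powX.
Qed.

Lemma atomD_pow {R : realType} {p : nat} (a : R) (i j : 'I_p) (X : 'rV[R]_p) :
  0 < X ord0 j - X ord0 i ->
  differentiable (fun Y : 'rV[R]_p => (Y ord0 j - Y ord0 i) `^ a) X.
Proof.
move=> x0; apply: (@atom_diff R p (fun z => z `^ a) _ X); first exact: coord_diff.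
exact: (@ex_derive _ _ _ _ _ _ _ (@der_pow R a _ x0)).
Qed.

Lemma atomD_abs {R : realType} {p : nat} (a : R) (i j : 'I_p) (X : 'rV[R]_p) :
  0 < X ord0 j - X ord0 i ->
  differentiable (fun Y : 'rV[R]_p => `|Y ord0 j - Y ord0 i| `^ a) X.
Proof.
move=> x0; apply: (@atom_diff R p (fun z => `|z| `^ a) _ X); first exact: coord_diff.
exact: (@ex_derive _ _ _ _ _ _ _ (@der_abs R a _ x0)).
Qed.

Lemma der_sq {R : realType} (y : R) : is_derive y 1 (fun z => z ^+ 2) (2%:R * y ^+ 1).
Proof.
split; first exact: exprn_derivable.
by rewrite -derive1E exp_derive1.
Qed.

Lemma atomX_sq {R : realType} {p : nat} (i : 'I_p) (X : 'rV[R]_p) :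
  is_derive X X (fun Y : 'rV[R]_p => Y ord0 i ^+ 2) (2 * X ord0 i ^+ 2).
Proof.
apply: is_derive_eq.
  exact: (@atom_der R p _ _ X X _ (@HLc R p i) (@der_sq R _)).
by rewrite expr1 expr2 mulrA.
Qed.

Lemma atomD_sq {R : realType} {p : nat} (i : 'I_p) (X : 'rV[R]_p) :
  differentiable (fun Y : 'rV[R]_p => Y ord0 i ^+ 2) X.
Proof.
apply: (@atom_diff R p (fun z => z ^+ 2) _ X); first exact: differentiable_coord.
exact: (@ex_derive _ _ _ _ _ _ _ (@der_sq R _)).
Qed.

Lemma rp_consec {R : realType} {p : nat} (X : 'rV[R]_p) (i j : 'I_p) :
  inRp X -> val j == (val i).+1 -> 0 < X ord0 j - X ord0 i.
Proof. by move=> [H _] /eqP e; rewrite subr_gt0; apply: H; rewrite e. Qed.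

Lemma pair_der {R : realType} {p : nat} (a : R) (X : 'rV[R]_p) (i j : 'I_p) :
  inRp X -> j != i ->
  is_derive X X (fun Y : 'rV[R]_p => `|Y ord0 i - Y ord0 j| `^ a) (a * `|X ord0 i - X ord0 j| `^ a)
  /\ differentiable (fun Y : 'rV[R]_p => `|Y ord0 i - Y ord0 j| `^ a) X.
Proof.
move=> [H _] ji; have [lij|lji] := ltnP i j.
  have x0 : 0 < X ord0 j - X ord0 i by rewrite subr_gt0; exact: H.
  have -> : (fun Y : 'rV[R]_p => `|Y ord0 i - Y ord0 j| `^ a) =
            (fun Y : 'rV[R]_p => `|Y ord0 j - Y ord0 i| `^ a).
    by apply/funext => Y; rewrite distrC.
  rewrite distrC ger0_norm ?ltW //; split; [exact: atomX_abs | exact: atomD_abs].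
have lji' : (j < i)%N by rewrite ltn_neqAle lji andbT.
have x0 : 0 < X ord0 i - X ord0 j by rewrite subr_gt0; exact: H.
rewrite ger0_norm ?ltW //; split; [exact: atomX_abs | exact: atomD_abs].
Qed.

Lemma Fdiff {R : realType} (m chi alpha : R) (p : nat) (X : 'rV[R]_p) :
  inRp X -> differentiable (Fmalpha m chi alpha (p:=p)) X.
Proof.
move=> hX; rewrite /Fmalpha.
apply: difD; first apply: difB.
- apply: difZ; rewrite /consec_sum; apply: diff_sumP => i _; apply: diff_sumP => j ji.
  by apply: atomD_pow; exact: (rp_consec _ _ _ hX ji).
- apply: difZ; rewrite /pair_sum; apply: diff_sumP => i _; apply: diff_sumP => j ji.
  exact: (proj2 (pair_der _ _ _ _ hX ji)).
- apply: difZ; apply: difZr; rewrite /sqnorm; apply: diff_sumP => i _.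
  exact: atomD_sq.
Qed.

Lemma Fder {R : realType} (m chi alpha : R) (p : nat) (X : 'rV[R]_p) :
  inRp X -> is_derive X X (Fmalpha m chi alpha (p:=p))
   ((m - 1)^-1 * (\sum_(i < p) \sum_(j < p | val j == (val i).+1) ((1 - m) * (X ord0 j - X ord0 i) `^ (1 - m)))
    - chi / (m - 1) * (\sum_(i < p) \sum_(j < p | j != i) ((1 - m) * `|X ord0 i - X ord0 j| `^ (1 - m)))
    + alpha * ((\sum_(i < p) (2 * X ord0 i ^+ 2)) / 2)).
Proof.
move=> hX; rewrite /Fmalpha.
apply: isdD; first apply: isdB.
- apply: isdZ; rewrite /consec_sum; apply: der_sumP => i _; apply: der_sumP => j ji.
  by apply: atomX_pow; exact: (rp_consec _ _ _ hX ji).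
- apply: isdZ; rewrite /pair_sum; apply: der_sumP => i _; apply: der_sumP => j ji.
  exact: (proj1 (pair_der _ _ _ _ hX ji)).
- apply: isdZ; apply: isdZr; rewrite /sqnorm; apply: der_sumP => i _.
  exact: atomX_sq.
Qed.

Lemma decomp {R : realType} {p : nat} (X : 'rV[R]_p) :
  X = \sum_(k < p) X ord0 k *: @basis_vec R p k.
Proof.
apply/rowP => j; rewrite summxE (bigD1 j) //= big1 => [|k kj].
  by rewrite !mxE eqxx mulr1 addr0.
by rewrite !mxE eq_sym (negbTE kj) mulr0.
Qed.

Lemma crit_zero {R : realType} {p : nat} (F : 'rV[R]_p -> R) X :
  differentiable F X -> critical_point F X -> 'D_X F X = 0.
Proof.
move=> dF cF; rewrite deriveE //.
rewrite [X in 'd F _ X](decomp X) linear_sum big1 // => k _.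
by rewrite linearZ /= -deriveE // (proj2 (cF k)) scaler0.
Qed.

Lemma euler {R : realType} (m chi alpha : R) (p : nat) (X : 'rV[R]_p) :
  1 < m -> inRp X -> critical_point (Fmalpha m chi alpha (p:=p)) X ->
  consec_sum m X - chi * pair_sum m X = alpha * sqnorm X.
Proof.
move=> m1 hX cX.
have := crit_zero _ _ (Fdiff m chi alpha _ _ hX) cX.
rewrite (@derive_val _ _ _ _ _ _ _ (Fder m chi alpha _ _ hX)).
have s1 : forall (q : nat) (P : 'I_q -> 'I_q -> bool) (f : 'I_q -> 'I_q -> R) (c : R),
   \sum_(i < q) \sum_(j < q | P i j) (c * f i j) = c * \sum_(i < q) \sum_(j < q | P i j) f i j.
  by move=> q P f c; rewrite mulr_sumr; apply: eq_bigr => i _; rewrite mulr_sumr.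
rewrite !s1 -/(consec_sum m X) -/(pair_sum m X) -mulr_sumr -/(sqnorm X).
have m0 : m - 1 != 0 by rewrite subr_eq0 gt_eqF.
move=> E; apply/eqP; rewrite -subr_eq0 -oppr_eq0; apply/eqP; rewrite -E.
field.
exact: m0.
Qed.

Lemma sum_ge_term {R : realType} {q : nat} (P : pred 'I_q) (F : 'I_q -> R) (k : 'I_q) :
  (forall i, P i -> 0 <= F i) -> P k -> F k <= \sum_(i < q | P i) F i.
Proof.
move=> H Pk; rewrite (bigD1 k) //=.
have : 0 <= \sum_(i < q | P i && (i != k)) F i.
  by apply: sumr_ge0 => i /andP [Pi _]; exact: H.
lra.
Qed.

Lemma consec_pos {R : realType} (m : R) (p : nat) (X : 'rV[R]_p) :
  (2 <= p)%N -> inRp X -> 0 < consec_sum m X.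
Proof.
move=> p2 hX.
have p0 : (0 < p)%N by apply: leq_trans p2.
have p1 : (1 < p)%N by [].
pose i0 := Ordinal p0; pose j1 := Ordinal p1.
have x0 : 0 < X ord0 j1 - X ord0 i0 by apply: (rp_consec _ _ _ hX).
have t0 : 0 < (X ord0 j1 - X ord0 i0) `^ (1 - m) by apply: powR_gt0.
apply: (lt_le_trans t0); apply: (le_trans _ (sum_ge_term _ _ i0 _ _)) => //.
- by apply: sum_ge_term => // j _; exact: powR_ge0.
- by move=> i _; apply: sumr_ge0 => j _; exact: powR_ge0.
Qed.

Lemma pair_ge0 {R : realType} (m : R) (p : nat) (X : 'rV[R]_p) : 0 <= pair_sum m X.
Proof. by apply: sumr_ge0 => i _; apply: sumr_ge0 => j _; exact: powR_ge0. Qed.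

Lemma sqnorm_pos {R : realType} (p : nat) (X : 'rV[R]_p) :
  (2 <= p)%N -> inRp X -> 0 < sqnorm X.
Proof.
move=> p2 [hX _].
have p0 : (0 < p)%N by apply: leq_trans p2.
have p1 : (1 < p)%N by [].
pose i0 := Ordinal p0; pose j1 := Ordinal p1.
have x0 : X ord0 i0 < X ord0 j1 by apply: hX.
have H : forall i, true -> 0 <= X ord0 i ^+ 2 by move=> i _; exact: sqr_ge0.
have [e|ne] := eqVneq (X ord0 i0) 0.
  have : 0 < X ord0 j1 ^+ 2 by rewrite exprn_gt0 // -e.
  move=> h; apply: (lt_le_trans h); exact: (sum_ge_term _ _ j1 H).
have : 0 < X ord0 i0 ^+ 2 by rewrite exprn_even_gt0.
move=> h; apply: (lt_le_trans h); exact: (sum_ge_term _ _ i0 H).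
Qed.

Lemma ratio_le {R : realType} (m : R) (p : nat) (X : 'rV[R]_p) :
  0 < Cp m p -> inRp X -> pair_sum m X / consec_sum m X <= (Cp m p)^-1.
Proof.
move=> c0 hX; rewrite /Cp invrK.
set S := [set _ | _ in _].
have [hs|nh] := pselect (has_sup S).
  by apply: (sup_upper_bound hs); exists X.
by move: c0; rewrite /Cp -/S sup_out // invr0 ltxx.
Qed.

Lemma key {R : realType} (m chi : R) (p : nat) (X : 'rV[R]_p) :
  (2 <= p)%N -> 0 < chi -> chi <= Cp m p -> inRp X ->
  chi * pair_sum m X <= consec_sum m X /\
  (chi < Cp m p -> chi * pair_sum m X < consec_sum m X).
Proof.
move=> p2 chi0 chiC hX.
have c0 : 0 < Cp m p by apply: lt_le_trans chiC.
have hr := ratio_le _ _ _ c0 hX.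
have cpos := consec_pos m _ _ p2 hX.
have pg := pair_ge0 m _ X.
set c := consec_sum m X in hr cpos *; set q := pair_sum m X in hr pg *.
set C := Cp m p in hr c0 chiC *.
have h1 : q * C <= c.
  by move: hr; rewrite ler_pdivrMr // mulrC ler_pdivlMr.
have h2 : chi * q <= C * q by apply: ler_wpM2r.
split; first by rewrite mulrC in h1; lra.
move=> lt; have [q0|qp] := eqVneq q 0; first by rewrite q0 mulr0.
have qp' : 0 < q by rewrite lt_def qp pg.
have : chi * q < C * q by rewrite ltr_pM2r.
by rewrite mulrC in h1; lra.
Qed.

Theorem proposition2p4 (R : realType) (m chi alpha : R) (p : nat) :
  1 < m -> 0 < chi -> (2 <= p)%N ->
  ((chi < Cp m p -> alpha <= 0 ->
      forall X : 'rV[R]_p, inRp X -> ~ critical_point (Fmalpha m chi alpha (p:=p)) X)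
   /\
   (chi = Cp m p -> alpha < 0 ->
      forall X : 'rV[R]_p, inRp X -> ~ critical_point (Fmalpha m chi alpha (p:=p)) X)
   /\
   (Cp m p < chi ->
      forall V : 'rV[R]_p, inRp V -> critical_point (Fmalpha m chi alpha (p:=p)) V ->
        Fm m chi V = 2 / (m - 1) * alpha * (sqnorm V / 2)
        /\ Num.sg (Fm m chi V) = Num.sg alpha)).
Proof.
move=> m1 chi0 p2; split; [|split].
- move=> lt al X hX cX.
  have E := euler _ _ _ _ _ m1 hX cX.
  have [_ K] := key _ _ _ _ p2 chi0 (ltW lt) hX.
  have K' := K lt.
  have sq := sqnorm_pos _ _ p2 hX.
  have : alpha * sqnorm X <= 0 by rewrite pmulr_lle0.
  clear cX; lra.
- move=> eq al X hX cX.
  have E := euler _ _ _ _ _ m1 hX cX.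
  have ce : chi <= Cp m p by rewrite eq.
  have [K _] := key _ _ _ _ p2 chi0 ce hX.
  have sq := sqnorm_pos _ _ p2 hX.
  have : alpha * sqnorm X < 0 by rewrite pmulr_llt0.
  clear cX; lra.
- move=> _ V hV cV.
  have E := euler _ _ _ _ _ m1 hV cV.
  have m0 : m - 1 != 0 by rewrite subr_eq0 gt_eqF.
  have FE : Fm m chi V = 2 / (m - 1) * alpha * (sqnorm V / 2).
    rewrite /Fm /Fmalpha.
    have -> : consec_sum m V = alpha * sqnorm V + chi * pair_sum m V by lra.
    by field.
  split => //.
  have sq := sqnorm_pos _ _ p2 hV.
  have m0' : 0 < 2 / (m - 1) by rewrite divr_gt0 // subr_gt0.
  have s2 : 0 < sqnorm V / 2 by rewrite divr_gt0.
  by rewrite FE sgrM (gtr0_sg s2) mulr1 sgrM (gtr0_sg m0') mul1r.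
Qed.
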